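(* Let $n$ be a positive integer, $q=2^n$, $k$ an integer with $1\le k\le n-1$, and $d=\gcd(n,k)$. For $\alpha,\beta,\gamma\in\mathbb{F}_q$ define $$S(\alpha,\beta,\gamma)=\sum_{x\in\mathbb{F}_q}(-1)^{\mathrm{Tr}_1^n\left(\alpha x^{2^{2k}+1}+\beta x^{2^k+1}+\gamma x\right)}.$$ Then $$\sum_{\alpha,\beta,\gamma\in\mathbb{F}_q}S(\alpha,\beta,\gamma)^3=(2^{n+d}+2^n-2^d)\cdot 2^{3n}.$$ Equivalently, the number of triples $(x,y,z)\in\mathbb{F}_q^3$ with $x+y+z=0$, $x^{2^k+1}+y^{2^k+1}+z^{2^k+1}=0$ and $x^{2^{2k}+1}+y^{2^{2k}+1}+z^{2^{2k}+1}=0$ equals $2^{n+d}+2^n-2^d$.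
   Context: $\mathrm{Tr}_1^n:\mathbb{F}_{2^n}\to\mathbb{F}_2$ is the absolute trace $x\mapsto\sum_{i=0}^{n-1}x^{2^i}$. *)

(* Defs.v *)
From HB Require Import structures.
From mathcomp Require Import all_boot all_order all_algebra all_field.
Set Implicit Arguments. Unset Strict Implicit. Unset Printing Implicit Defensive.
Import GRing.Theory.
Local Open Scope ring_scope.

(* Absolute trace Tr_1^n x = \sum_{i<n} x^(2^i), valued in F (lands in {0,1}
   when #|F| = 2^n). *)
Definition absTr (F : finFieldType) (n : nat) (x : F) : F :=
  \sum_(i < n) x ^+ (2 ^ i)%N.

(* (-1)^(t) for t in F_2 = {0,1} embedded in F, as an integer. *)
Definition sgnF (F : finFieldType) (t : F) : int := if t == 0 then 1 else -1.

Definition Sab (F : finFieldType) (n k : nat) (a b c : F) : int :=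
  \sum_(x : F) sgnF (absTr n (a * x ^+ (2 ^ (2 * k) + 1)%N
                             + b * x ^+ (2 ^ k + 1)%N + c * x)).

(* Main.v *)
From HB Require Import structures.
From mathcomp Require Import all_boot all_order all_algebra all_field.
From Stdlib Require Import Lia.
Require Import Defs.
Set Implicit Arguments. Unset Strict Implicit. Unset Printing Implicit Defensive.
Import GRing.Theory Num.Theory.
Local Open Scope ring_scope.

Lemma frobD (R : comNzRingType) (chR : 2 \in [pchar R]) (x y : R) k :
  (x + y) ^+ (2 ^ k) = x ^+ (2 ^ k) + y ^+ (2 ^ k).
Proof.
elim: k => // k IHk; rewrite !expnSr !exprM IHk -(pFrobenius_autE chR) rmorphD.
by rewrite -!(pFrobenius_autE chR).
Qed.

Section Fix.
Variable F : finFieldType.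
Hypothesis ch : 2 \in [pchar F].
Variable n : nat.
Hypothesis cardF : #|F| = (2 ^ n)%N.
Hypothesis n_gt0 : (0 < n)%N.

Definition Pk j (t : F) := t ^+ (2 ^ j) == t.

Lemma PkD a b t : Pk a t -> Pk b t -> Pk (a + b) t.
Proof. by rewrite /Pk expnD exprM => /eqP -> . Qed.

Lemma PkB a b t : Pk (a + b) t -> Pk a t -> Pk b t.
Proof. by rewrite /Pk expnD exprM => h /eqP e; rewrite e in h. Qed.

Lemma PkM j a t : Pk a t -> Pk (j * a) t.
Proof.
move=> Pa; elim: j => [|j IH]; first by rewrite mul0n /Pk expn0 expr1.
by rewrite mulSn; apply: PkD.
Qed.

Lemma Pkmod a b t : Pk a t -> Pk b t -> Pk (a %% b) t.
Proof.
move=> Pa Pb; rewrite (divn_eq a b) in Pa.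
exact: PkB Pa (PkM _ Pb).
Qed.

Lemma Pkgcd t N : forall b a, (b < N)%N -> Pk a t -> Pk b t -> Pk (gcdn a b) t.
Proof.
elim: N => [|N IH] b a //= hb Pa Pb.
have [->|b0] := eqVneq b 0%N; first by rewrite gcdn0.
rewrite -gcdn_modl gcdnC; apply: IH => //; last exact: Pkmod.
by apply: leq_trans (ltn_pmod _ _) _; rewrite ?lt0n.
Qed.

Lemma Pkn t : Pk n t.
Proof. by rewrite /Pk -cardF expf_card. Qed.

Lemma fix_iff k t : Pk k t = Pk (gcdn n k) t.
Proof.
apply/idP/idP => h.
  exact: (Pkgcd (N := k.+1)) (Pkn t) h.
by rewrite -(divnK (dvdn_gcdr n k)); apply: PkM.
Qed.

Lemma card_roots (p : {poly F}) : p != 0 ->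
  (#|[pred x | root p x]| <= (size p).-1)%N.
Proof.
move=> pn0.
have h := max_poly_roots pn0 (rs := enum [pred x | root p x]).
rewrite cardE -ltnS -polySpred //; apply: h; last exact: enum_uniq.
by apply/allP => x; rewrite mem_enum.
Qed.

Lemma sizeXX e : (0 < e)%N -> size ('X^(2 ^ e) - 'X : {poly F}) = (2 ^ e).+1.
Proof.
move=> e0; rewrite size_polyDl size_polyXn // size_polyN size_polyX ltnS.
by move: (ltn_exp2l 0 e (isT : (1 < 2)%N)); rewrite expn0 e0 => ->.
Qed.

Lemma fixcount d : (0 < d)%N -> (d %| n)%N -> #|[pred t | Pk d t]| = (2 ^ d)%N.
Proof.
move=> d0 dn.
pose Pd : {poly F} := 'X^(2 ^ d) - 'X.
have sPd : size Pd = (2 ^ d).+1 by exact: sizeXX.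
have Pd0 : Pd != 0 by rewrite -size_poly_eq0 sPd.
have rPd t : root Pd t = Pk d t by rewrite /root /Pd !hornerE subr_eq0.
have chP : 2 \in [pchar {poly F}] by rewrite pchar_poly.
have eX : 'X^(2 ^ d) = 'X + Pd by rewrite /Pd addrC subrK.
have hj j : exists Q : {poly F}, 'X^(2 ^ (j * d)) = 'X + Pd * Q.
  elim: j => [|j [Q hQ]]; first by exists 0; rewrite mul0n expn0 expr1 mulr0 addr0.
  exists (1 + Pd ^+ (2 ^ d).-1 * Q ^+ (2 ^ d)).
  rewrite mulSn addnC expnD exprM hQ (frobD chP) exprMn eX.
  by rewrite mulrDr mulr1 mulrA -exprS prednK ?expn_gt0 // [RHS]addrA.
have [Q hQ] := hj (n %/ d)%N; rewrite divnK // in hQ.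
have hPQ : Pd * Q = 'X^(2 ^ n) - 'X by rewrite hQ (addrC 'X) addrK.
have Q0 : Q != 0.
  apply/eqP => Q0; move: hPQ; rewrite Q0 mulr0 => /(congr1 (fun p : {poly F} => size p)).
  by rewrite sizeXX // size_poly0.
have sQ : (size Q).-1 = (2 ^ n - 2 ^ d)%N.
  have := size_mul Pd0 Q0; rewrite hPQ sizeXX // sPd addSn /= => e.
  rewrite -subn1; move: e; rewrite -!plusE -!minusE.
  move: (2 ^ n)%N (2 ^ d)%N (size Q) => a b c; lia.
have rQ := card_roots Q0; rewrite sQ in rQ.
have rP := card_roots Pd0; rewrite sPd /= in rP.
have U := cardUI [pred x | root Pd x] [pred x | root Q x].
have UT : #|[predU [pred x | root Pd x] & [pred x | root Q x]]| = (2 ^ n)%N.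
  rewrite eq_cardT -?cardT // => t; rewrite !inE -rootM hPQ /root !hornerE.
  by rewrite -cardF expf_card subrr eqxx.
rewrite UT in U.
have -> : #|[pred t | Pk d t]| = #|[pred x | root Pd x]|.
  by apply: eq_card => t; rewrite !inE rPd.
have dlen : (2 ^ d <= 2 ^ n)%N by rewrite leq_exp2l // dvdn_leq.
move: U rQ rP dlen; set A := #|_|; set B := #|_|; set C := #|_|.
set N := (2 ^ n)%N; set D := (2 ^ d)%N.
move=> U /leP rQ /leP rP /leP dlen; move: U; rewrite -?plusE -?minusE.
move: A B C N D rQ rP dlen => A B C N D; rewrite -?minusE; lia.
Qed.

End Fix.

Lemma triple (T : finType) (V : nmodType) (H : T -> T -> T -> V) :
  \sum_a \sum_b \sum_c H a b c = \sum_(p : T * (T * T)) H p.1 p.2.1 p.2.2.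
Proof. by under eq_bigr do rewrite pair_big; rewrite pair_big. Qed.

Lemma swap6 (T : finType) (V : nmodType) (G : T -> T -> T -> T -> T -> T -> V) :
  \sum_a \sum_b \sum_c \sum_x \sum_y \sum_z G a b c x y z =
  \sum_x \sum_y \sum_z \sum_a \sum_b \sum_c G a b c x y z.
Proof.
rewrite triple; under eq_bigr do rewrite triple.
rewrite exchange_big /= [RHS]triple.
by apply: eq_bigr => w _; rewrite triple.
Qed.

Lemma add9 (V : nmodType) (p1 q1 r1 p2 q2 r2 p3 q3 r3 : V) :
  (p1+q1+r1) + (p2+q2+r2) + (p3+q3+r3) = (p1+p2+p3) + (q1+q2+q3) + (r1+r2+r3).
Proof. by rewrite (AC (3*3*3) ((1*4*7)*(2*5*8)*(3*6*9))). Qed.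

Lemma c2id (R : comNzRingType) (ch : 2 \in [pchar R]) (X Y P Q : R) :
  X + Y + (X + P + (Q + Y)) = P + Q.
Proof.
by rewrite (AC (2*(2*2)) ((1*3)*(2*6)*(4*5))) /= !(addrr_pchar2 ch) !add0r.
Qed.

Section S.
Variable F : finFieldType.
Hypothesis ch : 2 \in [pchar F].

Lemma frob_sum (I : finType) (G : I -> F) k :
  (\sum_i G i) ^+ (2 ^ k) = \sum_i G i ^+ (2 ^ k).
Proof.
elim/big_rec2: _ => [|i y1 y2 _ <-]; first by rewrite expr0n expn_eq0.
by rewrite frobD.
Qed.

Variable n : nat.
Hypothesis cardF : #|F| = (2 ^ n)%N.

Lemma absTrD (x y : F) : absTr n (x + y) = absTr n x + absTr n y.
Proof. by rewrite /absTr -big_split; apply: eq_bigr => i _; rewrite frobD. Qed.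

Lemma absTr_sq (x : F) : absTr n x ^+ 2 = absTr n x.
Proof.
rewrite -(expn1 2) /absTr frob_sum.
under eq_bigr do rewrite -exprM -expnSr.
case: n cardF => [|m] cF; first by rewrite !big_ord0.
rewrite big_ord_recr big_ord_recl /= -cF expf_card.
rewrite addrC; congr (_ + _); apply: eq_bigr => i _ //.
Qed.

Lemma absTr01 (x : F) : (absTr n x == 0) || (absTr n x == 1).
Proof.
have := absTr_sq x; rewrite expr2 => /eqP; rewrite -subr_eq0 -{3}(mulr1 (absTr n x)).
by rewrite -mulrBr mulf_eq0 subr_eq0 eq_sym.
Qed.

Definition f (x : F) : int := sgnF (absTr n x).

Lemma fD (x y : F) : f (x + y) = f x * f y.
Proof.
rewrite /f /sgnF absTrD.
case/orP: (absTr01 x) => /eqP ->; case/orP: (absTr01 y) => /eqP ->;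
  rewrite ?addr0 ?add0r ?eqxx ?oner_eq0 ?(addrr_pchar2 ch) ?eqxx //.
Qed.


Definition TrP : {poly F} := \sum_(i < n) 'X^(2 ^ i).

Lemma TrP_horner x : TrP.[x] = absTr n x.
Proof. by rewrite /TrP horner_sum; apply: eq_bigr => i _; rewrite hornerXn. Qed.

Hypothesis n_gt0 : (0 < n)%N.

Lemma TrP_neq0 : TrP != 0.
Proof.
have : TrP`_(2 ^ n.-1) = 1.
  rewrite /TrP coef_sum.
  case: n n_gt0 => // m _ /=.
  rewrite (bigD1 ord_max) //= coefXn eqxx big1 ?addr0 // => i ni.
  rewrite coefXn eqn_exp2l // eq_sym.
  by move: ni; rewrite -(inj_eq val_inj) /= => /negbTE ->.
move=> h; apply/eqP => h0; move: h; by rewrite h0 coef0 => /eqP; rewrite eq_sym oner_eq0.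
Qed.

Lemma TrP_size : (size TrP <= (2 ^ n.-1).+1)%N.
Proof.
rewrite /TrP; apply: (big_ind (fun p : {poly F} => size p <= (2 ^ n.-1).+1)%N).
- by rewrite size_poly0.
- move=> p1 p2 h1 h2; apply: leq_trans (size_polyD _ _) _.
  by rewrite geq_max h1 h2.
- move=> i _; rewrite size_polyXn ltnS leq_exp2l //.
  by rewrite -ltnS prednK ?ltn_ord.
Qed.

Lemma exists_tr1 : exists u : F, absTr n u = 1.
Proof.
have [u /eqP hu|H] := pickP (fun u : F => absTr n u == 1); first by exists u.
have allr : all (root TrP) (enum F).
  apply/allP => u _; rewrite /root TrP_horner.
  by case/orP: (absTr01 u) => // h; move: (H u); rewrite h.
have := max_poly_roots TrP_neq0 allr (enum_uniq _).
rewrite -cardE cardF => h.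
have := leq_trans h TrP_size; rewrite ltnS.
case: n n_gt0 => // m _ /=; rewrite expnS leqNgt.
have : (0 < 2 ^ m)%N by rewrite expn_gt0.
by move=> p; rewrite -[X in (X < _)%N]mul1n ltn_pmul2r.
Qed.


Lemma absTr0 : absTr n (0 : F) = 0.
Proof. by rewrite /absTr big1 // => i _; rewrite expr0n expn_eq0. Qed.

Lemma f0 : f 0 = 1.
Proof. by rewrite /f absTr0 /sgnF eqxx. Qed.

Lemma sum_f : \sum_(u : F) f u = 0.
Proof.
have [u0 hu0] := exists_tr1.
have fu0 : f u0 = -1 by rewrite /f hu0 /sgnF oner_eq0.
set S := \sum_u f u.
have : S = - S.
  rewrite {1}/S (reindex_inj (addIr u0)) /=.
  by rewrite -mulrN1 big_distrl /=; apply: eq_bigr => u _; rewrite fD fu0.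
move/eqP; rewrite -addr_eq0 -mulr2n mulrn_eq0 /= => /eqP //.
Qed.

Lemma orth (x : F) : \sum_(c : F) f (c * x) = if x == 0 then #|F|%:Z else 0.
Proof.
case: eqP => [->|/eqP xn0].
  under eq_bigr do rewrite mulr0 f0.
  by rewrite sumr_const natz.
rewrite -[RHS](sum_f); symmetry; exact: (reindex_inj (mulIf xn0)).
Qed.

Lemma S3 (a b c : F) k :
  Sab n k a b c ^+ 3 = \sum_(x : F) \sum_(y : F) \sum_(z : F)
    f (a * (x ^+ (2 ^ (2 * k) + 1) + y ^+ (2 ^ (2 * k) + 1) + z ^+ (2 ^ (2 * k) + 1)))
  * f (b * (x ^+ (2 ^ k + 1) + y ^+ (2 ^ k + 1) + z ^+ (2 ^ k + 1)))
  * f (c * (x + y + z)).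
Proof.
have -> : Sab n k a b c = \sum_(x : F) f (a * x ^+ (2 ^ (2 * k) + 1)
                             + b * x ^+ (2 ^ k + 1) + c * x) by [].
rewrite exprS expr2 mulr_suml; apply: eq_bigr => x _.
rewrite mulr_suml mulr_sumr; apply: eq_bigr => y _.
rewrite mulr_sumr mulr_sumr; apply: eq_bigr => z _.
rewrite -!fD; congr f.
by rewrite !mulrDr addrA add9.
Qed.

Definition ite0 (A : F) : int := if A == 0 then #|F|%:Z else 0.

Lemma inner3 (A B C : F) :
  \sum_(a : F) \sum_(b : F) \sum_(c : F) f (a * A) * f (b * B) * f (c * C)
  = ite0 A * ite0 B * ite0 C.
Proof.
under eq_bigr => a _ do under eq_bigr => b _ do rewrite -mulr_sumr orth.
under eq_bigr => a _ do rewrite -mulr_suml -mulr_sumr orth.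
by rewrite -!mulr_suml orth.
Qed.

Definition Bm e (x y : F) := x ^+ (2 ^ e) * y + y ^+ (2 ^ e) * x.

Lemma Bsimp e (x y : F) :
  x ^+ (2 ^ e + 1) + y ^+ (2 ^ e + 1) + (x + y) ^+ (2 ^ e + 1) = Bm e x y.
Proof.
rewrite !addn1 !exprSr (frobD ch) mulrDl !mulrDr.
exact: c2id.
Qed.

Lemma sumz e1 e2 (x y : F) :
  \sum_(z : F) ite0 (x ^+ (2 ^ e1 + 1) + y ^+ (2 ^ e1 + 1) + z ^+ (2 ^ e1 + 1))
    * ite0 (x ^+ (2 ^ e2 + 1) + y ^+ (2 ^ e2 + 1) + z ^+ (2 ^ e2 + 1))
    * ite0 (x + y + z)
  = ite0 (Bm e1 x y) * ite0 (Bm e2 x y) * #|F|%:Z.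
Proof.
rewrite (bigD1 (x + y)) //= big1 ?addr0.
  by rewrite !Bsimp /ite0 (addrr_pchar2 ch) eqxx.
move=> z zn; rewrite {3}/ite0.
case: eqP => [/eqP|]; last by rewrite mulr0.
rewrite addr_eq0 (oppr_pchar2 ch) eq_sym => /eqP h.
by rewrite h eqxx in zn.
Qed.

Lemma Bm0 e (y : F) : Bm e 0 y = 0.
Proof. by rewrite /Bm expr0n expn_eq0 /= mul0r mulr0 addr0. Qed.

Lemma condt e (x t : F) : x != 0 -> (Bm e x (t * x) == 0) = Pk e t.
Proof.
move=> xn0.
have -> : Bm e x (t * x) = (x ^+ (2 ^ e) * x) * (t + t ^+ (2 ^ e)).
  rewrite /Bm exprMn mulrDr; congr (_ + _).
    by rewrite mulrCA mulrC.
  by rewrite [LHS](AC 3 ((2*3)*1)).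
rewrite mulf_eq0 (negbTE (mulf_neq0 (expf_neq0 _ xn0) xn0)) /= addr_eq0 (oppr_pchar2 ch) eq_sym.
by [].
Qed.

Definition cnt k (x y : F) : nat := (Bm (2 * k) x y == 0) && (Bm k x y == 0).

Lemma cnt_t k (x t : F) : x != 0 -> cnt k x (t * x) = Pk k t.
Proof.
move=> xn0; rewrite /cnt !condt //.
case h : (Pk k t); rewrite ?andbF // andbT.
by rewrite mul2n -addnn (PkD h h).
Qed.

Lemma count_xy k : (0 < k)%N ->
  (\sum_(x : F) \sum_(y : F) cnt k x y = 2 ^ n + (2 ^ n).-1 * 2 ^ gcdn n k)%N.
Proof.
move=> k0.
rewrite (bigD1 0) //=; congr (_ + _)%N.
  rewrite -cardF -sum1_card; apply: eq_bigr => y _.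
  by rewrite /cnt !Bm0 eqxx.
have inner x : x != 0 -> (\sum_(y : F) cnt k x y = 2 ^ gcdn n k)%N.
  move=> xn0; rewrite (reindex_inj (mulIf xn0)) /=.
  under eq_bigr do rewrite cnt_t // (fix_iff cardF).
  rewrite -(fixcount ch cardF) ?gcdn_gt0 ?n_gt0 ?dvdn_gcdl //.
  rewrite -sum1_card [RHS]big_mkcond /=; apply: eq_bigr => t _; rewrite inE; by case: (Pk _ t).
rewrite (eq_bigr (fun _ => 2 ^ gcdn n k)%N) //.
rewrite sum_nat_cond_const; congr (_ * _)%N.
by rewrite cardsE cardC1 cardF.
Qed.

Lemma ite_cnt k (x y : F) : ite0 (Bm (2 * k) x y) * ite0 (Bm k x y) * #|F|%:Z
  = (cnt k x y)%:R * (#|F|%:Z * #|F|%:Z * #|F|%:Z).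
Proof.
rewrite /ite0 /cnt; case: (Bm (2 * k) x y == 0); case: (Bm k x y == 0);
  by rewrite /= ?mul0r ?mul1r ?mulr0 ?mul0r ?mulrA.
Qed.

End S.


Theorem lemma4 (F : finFieldType) (n k : nat) :
  (0 < n)%N -> #|F| = (2 ^ n)%N -> (1 <= k)%N -> (k <= n - 1)%N ->
  \sum_(a : F) \sum_(b : F) \sum_(c : F) (Sab n k a b c) ^+ 3
    = ((2 ^ (n + gcdn n k))%N%:Z + (2 ^ n)%N%:Z - (2 ^ gcdn n k)%N%:Z)
      * (2 ^ (3 * n))%N%:Z.
Proof.
move=> n0 cardF k1 kn.
have ch : 2 \in [pchar F] by exact: (card_finPcharP cardF).
under eq_bigr do under eq_bigr do under eq_bigr do rewrite (S3 ch cardF).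
rewrite swap6.
under eq_bigr do under eq_bigr do under eq_bigr do rewrite (inner3 ch cardF n0).
under eq_bigr do under eq_bigr do rewrite (sumz ch).
under eq_bigr do under eq_bigr do rewrite ite_cnt.
under eq_bigr do rewrite -mulr_suml -natr_sum.
rewrite -mulr_suml -natr_sum (count_xy ch cardF n0 k1) cardF.
have e1 : ((2 ^ n + (2 ^ n).-1 * 2 ^ gcdn n k)%N%:R : int)
   = (2 ^ (n + gcdn n k))%N%:Z + (2 ^ n)%N%:Z - (2 ^ gcdn n k)%N%:Z.
  apply: (addIr (2 ^ gcdn n k)%N%:Z); rewrite subrK natz -!PoszD; congr Posz.
  by rewrite -addnA -mulSnr prednK ?expn_gt0 // expnD addnC.
rewrite e1 -!PoszM; congr (_ * Posz _).
by rewrite -!expnD !mulSn mul0n addn0 addnA.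
Qed.
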